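(* For every set $\Gamma\subseteq\mathcal{L}(\boxdot)$ and every $\phi\in\mathcal{L}(\boxdot)$, the following are equivalent: (a) $\Gamma\vdash_{{\bf K5^\boxdot}}\phi$; (b) $\Gamma\vDash_{qe}\phi$; (c) $\Gamma\vDash_{pe}\phi$.
   Context: Fix a nonempty set $\mathbf{P}$ of propositional variables. A bimodal model is $\langle S,R_1,R_2,V\rangle$ with $S$ nonempty, $R_1,R_2\subseteq S\times S$, $V:\mathbf{P}\to\mathcal{P}(S)$. $\mathcal{L}(\boxdot):\ \phi::=p\mid\neg\phi\mid(\phi\wedge\phi)\mid\boxdot\phi$. Truth: $\mathcal{M},s\vDash\boxdot\phi$ iff for all $t,u$ with $sR_1t$ and $sR_2u$, ($\mathcal{M},t\vDash\phi\iff\mathcal{M},u\vDash\phi$); atoms and Booleans as usual. ${\bf K^\boxdot}$ has axioms: all instances of propositional tautologies; $\boxdot\top$; $\boxdot\phi\leftrightarrow\boxdot\neg\phi$; $\boxdot\phi\wedge\boxdot\psi\to\boxdot(\phi\wedge\psi)$; $\boxdot\phi\to\boxdot(\phi\vee\psi)\vee\boxdot(\neg\phi\vee\chi)$; rules: modus ponens and RE: from $\phi\leftrightarrow\psi$ infer $\boxdot\phi\leftrightarrow\boxdot\psi$. ${\bf K5^\boxdot}$ is ${\bf K^\boxdot}$ plus the axiom schema $\neg\boxdot\phi\to\boxdot(\neg\boxdot\phi\vee\psi)$. A bimodal frame/model is $qe$ (quasi-Euclidean) if for all $i,j\in\{1,2\}$ and all $x,y,z$: $xR_iy\wedge xR_jz\to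 yR_jz$; it is $pe$ (pseudo-Euclidean) if for all $i,j\in\{1,2\}$ and all $x,y,z$: $xR_iy\wedge xR_jz\to yR_1z\wedge yR_2z$. $\Gamma\vDash_{qe}\phi$ means: for every $qe$-model $\mathcal{M}$ and state $s$, if all of $\Gamma$ is true at $s$ then $\phi$ is true at $s$; similarly $\vDash_{pe}$. $\Gamma\vdash\phi$ means some finite conjunction of members of $\Gamma$ provably implies $\phi$. *)

(* Defs.v *)
From Stdlib Require Import List Classical.
Import ListNotations.

Section Syntax.
Variable P : Type.

Inductive form : Type :=
| Var : P -> form
| Neg : form -> form
| And : form -> form -> form
| Bd  : form -> form.

Definition Or (a b : form) : form := Neg (And (Neg a) (Neg b)).
Definition Imp (a b : form) : form := Neg (And a (Neg b)).
Definition Iff (a b : form) : form := And (Imp a b) (Imp b a).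
(* \top, using a fixed variable p0 (P is nonempty) *)
Definition Top (p0 : P) : form := Neg (And (Var p0) (Neg (Var p0))).

(* Propositional tautologies: formulas true under every Boolean assignment to
   their propositional "atoms", i.e. variables and boxdot-formulas. *)
Fixpoint peval (v : form -> bool) (f : form) : bool :=
  match f with
  | Var _ => v f
  | Bd _ => v f
  | Neg a => negb (peval v a)
  | And a b => andb (peval v a) (peval v b)
  end.
Definition taut (f : form) : Prop := forall v : form -> bool, peval v f = true.

Inductive K_thm (p0 : P) (Ax : form -> Prop) : form -> Prop :=
| ax_taut : forall f, taut f -> K_thm p0 Ax f
| ax_top : K_thm p0 Ax (Bd (Top p0))
| ax_neg : forall f, K_thm p0 Ax (Iff (Bd f) (Bd (Neg f)))
| ax_and : forall f g, K_thm p0 Ax (Imp (And (Bd f) (Bd g)) (Bd (And f g)))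
| ax_dis : forall f g h,
    K_thm p0 Ax (Imp (Bd f) (Or (Bd (Or f g)) (Bd (Or (Neg f) h))))
| ax_extra : forall f, Ax f -> K_thm p0 Ax f
| r_mp : forall f g, K_thm p0 Ax (Imp f g) -> K_thm p0 Ax f -> K_thm p0 Ax g
| r_re : forall f g, K_thm p0 Ax (Iff f g) -> K_thm p0 Ax (Iff (Bd f) (Bd g)).

Definition ax5 (f : form) : Prop :=
  exists a b, f = Imp (Neg (Bd a)) (Bd (Or (Neg (Bd a)) b)).

Definition K5_thm (p0 : P) : form -> Prop := K_thm p0 ax5.

Fixpoint conj (p0 : P) (l : list form) : form :=
  match l with
  | [] => Top p0
  | [a] => a
  | a :: l' => And a (conj p0 l')
  end.

Definition K5_derives (p0 : P) (G : form -> Prop) (f : form) : Prop :=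
  exists l : list form, (forall g, In g l -> G g) /\ K5_thm p0 (Imp (conj p0 l) f).

Record model : Type := {
  st : Type;
  st_inh : inhabited st;
  R1 : st -> st -> Prop;
  R2 : st -> st -> Prop;
  val : P -> st -> Prop }.

Fixpoint sat (M : model) (s : st M) (f : form) : Prop :=
  match f with
  | Var p => val M p s
  | Neg a => ~ sat M s a
  | And a b => sat M s a /\ sat M s b
  | Bd a => forall t u, R1 M s t -> R2 M s u -> (sat M t a <-> sat M u a)
  end.

Definition Rel (M : model) (i : bool) : st M -> st M -> Prop :=
  if i then R1 M else R2 M.

Definition qe (M : model) : Prop :=
  forall (i j : bool) (x y z : st M), Rel M i x y -> Rel M j x z -> Rel M j y z.

Definition pe (M : model) : Prop :=
  forall (i j : bool) (x y z : st M), Rel M i x y -> Rel M j x z ->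
    R1 M y z /\ R2 M y z.

Definition conseq (C : model -> Prop) (G : form -> Prop) (f : form) : Prop :=
  forall (M : model) (s : st M), C M -> (forall g, G g -> sat M s g) -> sat M s f.

End Syntax.

Arguments Var {P}. Arguments Neg {P}. Arguments And {P}. Arguments Bd {P}.
Arguments K5_derives {P}. Arguments conseq {P}. Arguments qe {P}. Arguments pe {P}.

(* Main.v *)
Require Import Defs.
From mathcomp Require classical_sets.
From Stdlib Require Import List Classical ClassicalEpsilon Setoid.
Import ListNotations.
Arguments Or {P}. Arguments Imp {P}. Arguments Iff {P}. Arguments Top {P}.
Arguments peval {P}. Arguments taut {P}. Arguments K_thm {P}. Arguments K5_thm {P}.
Arguments conj {P}. Arguments sat {P}. Arguments st {P}. Arguments R1 {P}. Arguments R2 {P}.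
Arguments val {P}. Arguments Rel {P}. Arguments ax5 {P}.

Section S.
Variable P : Type.
Variable p0 : P.
Notation F := (form P).
Notation Thm := (K5_thm p0).

Lemma thm_mp1 (a b : F) : Thm a -> (forall v, peval v a = true -> peval v b = true) -> Thm b.
Proof.
  intros Ha H. eapply r_mp; [|exact Ha]. apply ax_taut. intro v. simpl.
  specialize (H v). destruct (peval v a), (peval v b); simpl; try reflexivity.
  specialize (H eq_refl); discriminate.
Qed.

Lemma thm_mp2 (a b c : F) : Thm a -> Thm b ->
  (forall v, peval v a = true -> peval v b = true -> peval v c = true) -> Thm c.
Proof.
  intros Ha Hb H.
  assert (Hab : Thm (And a b)).
  { eapply r_mp; [|exact Hb]. eapply r_mp; [|exact Ha]. apply ax_taut. intro v. simpl.
    destruct (peval v a), (peval v b); reflexivity. }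
  apply (thm_mp1 _ _ Hab). intros v Hv. simpl in Hv.
  apply andb_prop in Hv. destruct Hv. auto.
Qed.

Lemma peval_top v : peval v (Top p0) = true.
Proof. simpl. destruct (v (Var p0)); reflexivity. Qed.

Lemma peval_conj_cons v a l : peval v (conj p0 (a :: l)) = andb (peval v a) (peval v (conj p0 l)).
Proof.
  destruct l as [|b l].
  - cbn [conj]. rewrite peval_top. destruct (peval v a); reflexivity.
  - reflexivity.
Qed.

Lemma peval_conj v l : peval v (conj p0 l) = true <-> forall g, In g l -> peval v g = true.
Proof.
  induction l as [|a l IH].
  - split; [intros _ g []|intros; apply peval_top].
  - rewrite peval_conj_cons. split.
    + intros H g [<-|Hg]; apply andb_prop in H; destruct H as [H1 H2]; auto.
      apply IH; auto.
    + intros H. rewrite (H a (or_introl eq_refl)). simpl. apply IH. intros g Hg; apply H; right; auto.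
Qed.

Lemma sat_imp (M : model P) s (a b : F) : sat M s (Imp a b) <-> (sat M s a -> sat M s b).
Proof. simpl. split; intros H; [intros Ha; apply NNPP; intro Hb; apply H; auto| intros [Ha Hb]; auto]. Qed.

Lemma sat_or (M : model P) s (a b : F) : sat M s (Or a b) <-> (sat M s a \/ sat M s b).
Proof. simpl. split; intros H; [apply NNPP; intro Hn; apply H; split; intro; apply Hn; auto | intros [Ha Hb]; destruct H; auto]. Qed.

Lemma sat_iff (M : model P) s (a b : F) : sat M s (Iff a b) <-> (sat M s a <-> sat M s b).
Proof. unfold Iff. change (sat M s (And (Imp a b) (Imp b a))) with (sat M s (Imp a b) /\ sat M s (Imp b a)). rewrite !sat_imp. tauto. Qed.

Lemma sat_top (M : model P) s : sat M s (Top p0).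
Proof. simpl. tauto. Qed.

Lemma sat_conj (M : model P) s l : (forall g, In g l -> sat M s g) -> sat M s (conj p0 l).
Proof.
  induction l as [|a l IH]; intros H.
  - apply sat_top.
  - destruct l as [|b l].
    + apply H; left; auto.
    + change (sat M s a /\ sat M s (conj p0 (b :: l))). split.
      * apply H; left; auto.
      * apply IH; intros; apply H; right; auto.
Qed.

Lemma sat_bd (M : model P) s (a : F) : sat M s (Bd a) <-> forall t u, R1 M s t -> R2 M s u -> (sat M t a <-> sat M u a).
Proof. reflexivity. Qed.

Lemma taut_sat (M : model P) s f : taut f -> sat M s f.
Proof.
  intros Ht.
  set (v := fun g => if excluded_middle_informative (sat M s g) then true else false).
  assert (Hv : forall g, peval v g = true <-> sat M s g).
  { induction g as [p|g IH|g1 IH1 g2 IH2|g IH]; simpl.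
    - unfold v. destruct (excluded_middle_informative _); split; intros; auto; try discriminate; contradiction.
    - destruct (peval v g); simpl; split; intros H; try discriminate; try reflexivity;
      [exfalso; apply H; apply IH; reflexivity | intro Hs; apply IH in Hs; discriminate].
    - split; intros H.
      + apply andb_prop in H. destruct H. split; [apply IH1|apply IH2]; auto.
      + destruct H as [H1 H2]. apply IH1 in H1. apply IH2 in H2. rewrite H1, H2. reflexivity.
    - unfold v. destruct (excluded_middle_informative _); split; intros; auto; try discriminate; contradiction. }
  apply Hv. apply Ht.
Qed.

Lemma soundness f : Thm f -> forall M : model P, qe M -> forall s, sat M s f.
Proof.
  intros H. induction H; intros M HM s.
  - apply taut_sat; auto.
  - simpl. intros. tauto.
  - apply sat_iff. simpl. split; intros H t u Ht Hu; specialize (H t u Ht Hu); tauto.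
  - apply sat_imp. simpl. intros [H1 H2] t u Ht Hu. specialize (H1 t u Ht Hu). specialize (H2 t u Ht Hu). tauto.
  - apply sat_imp. intros Hb. apply sat_or. simpl in Hb.
    destruct (classic (exists t, R1 M s t /\ sat M t f)) as [[t0 [Ht0 Hf0]]|Hn].
    + left. apply sat_bd. intros t u Ht Hu.
      assert (Fu : sat M u f) by (apply (Hb t0 u Ht0 Hu); auto).
      assert (Ft : sat M t f) by (apply (Hb t u Ht Hu); auto).
      rewrite !sat_or. tauto.
    + right. apply sat_bd. intros t u Ht Hu.
      assert (Ft : ~ sat M t f) by (intro; apply Hn; eauto).
      assert (Fu : ~ sat M u f) by (intro Hf; apply Ft; apply (Hb t u Ht Hu); auto).
      rewrite !sat_or. simpl. tauto.
  - destruct H as [a [b ->]]. apply sat_imp. intros Hn.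
    assert (Hex : exists t1 u1, R1 M s t1 /\ R2 M s u1 /\ ~ (sat M t1 a <-> sat M u1 a)).
    { apply NNPP; intro C. apply Hn. simpl. intros t u Ht Hu. apply NNPP; intro D. apply C. eauto. }
    destruct Hex as [t1 [u1 [Ht1 [Hu1 Hd]]]].
    assert (Key : forall x, R1 M x t1 -> R2 M x u1 -> sat M x (Or (Neg (Bd a)) b)).
    { intros x H1 H2. apply sat_or. left. simpl. intro Hx. apply Hd. apply Hx; auto. }
    apply sat_bd. intros t u Ht Hu. split; intros _.
    + apply Key; [exact (HM false true s u t1 Hu Ht1) | exact (HM false false s u u1 Hu Hu1)].
    + apply Key; [exact (HM true true s t t1 Ht Ht1) | exact (HM true false s t u1 Ht Hu1)].
  - specialize (IHK_thm1 M HM s). specialize (IHK_thm2 M HM s).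
    exact (proj1 (sat_imp _ _ _ _) IHK_thm1 IHK_thm2).
  - apply sat_iff. simpl. split; intros H' t u Ht Hu; specialize (H' t u Ht Hu);
    pose proof (proj1 (sat_iff _ _ _ _) (IHK_thm M HM t));
    pose proof (proj1 (sat_iff _ _ _ _) (IHK_thm M HM u)); tauto.
Qed.


Ltac bt := intro; simpl;
  repeat (match goal with |- context [peval ?w ?x] => destruct (peval w x)
                        | |- context [?w (Bd ?x)] => destruct (w (Bd x))
                        | |- context [?w (Var ?x)] => destruct (w (Var x)) end);
  simpl; intros; try reflexivity; try discriminate.

Lemma thm_imp (a b : F) : (forall v, peval v a = true -> peval v b = true) -> Thm (Imp a b).
Proof.
  intros H. apply ax_taut. intro v. specialize (H v). simpl.
  destruct (peval v a), (peval v b); simpl; try reflexivity. specialize (H eq_refl); discriminate.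
Qed.

Lemma thm_iff (a b : F) : (forall v, peval v a = peval v b) -> Thm (Iff a b).
Proof.
  intros H. apply ax_taut. intro v. specialize (H v). simpl. rewrite H.
  destruct (peval v b); reflexivity.
Qed.

Definition cons (S : F -> Prop) := ~ exists l, (forall g, In g l -> S g) /\ Thm (Neg (conj p0 l)).
Definition mcs (S : F -> Prop) := cons S /\ forall f, S f \/ S (Neg f).

Lemma split_list (A : F -> Prop) x l : (forall g, In g l -> A g \/ g = x) ->
  exists l', (forall g, In g l' -> A g) /\
    forall v, peval v (conj p0 l') = true -> peval v x = true -> peval v (conj p0 l) = true.
Proof.
  induction l as [|a l IH]; intros H.
  - exists []. split; [intros g []|]. intros; apply peval_top.
  - destruct IH as [l' [H1 H2]]. { intros g Hg; apply H; right; auto. }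
    destruct (H a (or_introl eq_refl)) as [Ha| ->].
    + exists (a::l'). split. { intros g [<-|Hg]; auto. }
      intros v Hv Hx. rewrite peval_conj_cons in *. apply andb_prop in Hv.
      destruct Hv as [Hv1 Hv2]. rewrite Hv1, (H2 v Hv2 Hx). reflexivity.
    + exists l'. split; auto. intros v Hv Hx. rewrite peval_conj_cons, Hx, (H2 v Hv Hx). reflexivity.
Qed.

Lemma derive_incons l l' x : Thm (Neg (conj p0 l)) ->
  (forall v, peval v (conj p0 l') = true -> peval v (Neg x) = true -> peval v (conj p0 l) = true) ->
  Thm (Imp (conj p0 l') x).
Proof.
  intros Ht H. apply (thm_mp1 _ _ Ht). intros v Hv. specialize (H v). simpl in *.
  destruct (peval v (conj p0 l')), (peval v x); simpl in *; try reflexivity.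
  rewrite (H eq_refl eq_refl) in Hv. discriminate.
Qed.

Section MCS.
Variable S : F -> Prop.
Hypothesis HS : mcs S.

Lemma mcs_deriv l f : (forall g, In g l -> S g) -> Thm (Imp (conj p0 l) f) -> S f.
Proof.
  destruct HS as [Hc Hm]. intros Hl Ht. destruct (Hm f) as [|Hn]; auto.
  exfalso; apply Hc. exists (Neg f :: l). split. { intros g [<-|Hg]; auto. }
  apply (thm_mp1 _ _ Ht). intros v Hv. change (negb (peval v (conj p0 (Neg f :: l))) = true).
  rewrite peval_conj_cons. simpl in *.
  destruct (peval v (conj p0 l)), (peval v f); simpl in *; try reflexivity; discriminate.
Qed.

Lemma mcs_thm f : Thm f -> S f.
Proof.
  intros Ht. apply (mcs_deriv []). { intros g []. }
  apply (thm_mp1 _ _ Ht). intros v Hv. simpl in *. rewrite Hv.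
  destruct (v (Var p0)); reflexivity.
Qed.

Lemma mcs_mp1 a b : S a -> Thm (Imp a b) -> S b.
Proof. intros Ha Ht. apply (mcs_deriv [a]); auto. intros g [<-|[]]; auto. Qed.

Lemma mcs_taut1 a b : S a -> (forall v, peval v a = true -> peval v b = true) -> S b.
Proof. intros Ha H. apply (mcs_mp1 a); auto. apply thm_imp; auto. Qed.

Lemma mcs_taut2 a b c : S a -> S b ->
  (forall v, peval v a = true -> peval v b = true -> peval v c = true) -> S c.
Proof.
  intros Ha Hb H. apply (mcs_deriv [a; b]). { intros g [<-|[<-|[]]]; auto. }
  apply thm_imp. intros v Hv. simpl in Hv. apply andb_prop in Hv. destruct Hv; auto.
Qed.

Lemma mcs_neg f : S (Neg f) <-> ~ S f.
Proof.
  destruct HS as [Hc Hm]. split.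
  - intros Hn Hf. apply Hc. exists [f; Neg f]. split. { intros g [<-|[<-|[]]]; auto. }
    apply ax_taut. intro v. simpl. destruct (peval v f); reflexivity.
  - intros Hn. destruct (Hm f); tauto.
Qed.

Lemma mcs_imp a b : S (Imp a b) -> S a -> S b.
Proof. intros H1 H2. apply (mcs_taut2 _ _ _ H1 H2). bt. Qed.

Lemma mcs_or a b : S (Or a b) -> S a \/ S b.
Proof.
  intros H. destruct (proj2 HS a) as [|Hn]; auto. right.
  apply (mcs_taut2 _ _ _ H Hn). bt.
Qed.

Lemma mcs_and a b : S a -> S b -> S (And a b).
Proof. intros H1 H2. apply (mcs_taut2 _ _ _ H1 H2). bt. Qed.

Lemma mcs_and_iff a b : S (And a b) <-> S a /\ S b.
Proof.
  split.
  - intros H. split; apply (mcs_taut1 _ _ H); bt.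
  - intros [H1 H2]; apply mcs_and; auto.
Qed.

Lemma mcs_re a b : Thm (Iff a b) -> S (Bd a) -> S (Bd b).
Proof.
  intros Ht Ha. apply (mcs_mp1 _ _ Ha). apply (thm_mp1 _ _ (r_re _ _ _ _ _ Ht)). bt.
Qed.

Lemma mcs_ret a b : (forall v, peval v a = peval v b) -> S (Bd a) -> S (Bd b).
Proof. intros H. apply mcs_re. apply thm_iff; auto. Qed.

Lemma mcs_dneg f : S (Bd (Neg f)) -> S (Bd f).
Proof. intros H. apply (mcs_mp1 _ _ H). apply (thm_mp1 _ _ (ax_neg _ _ _ f)). bt. Qed.

Lemma mcs_negd f : S (Bd f) -> S (Bd (Neg f)).
Proof. intros H. apply (mcs_mp1 _ _ H). apply (thm_mp1 _ _ (ax_neg _ _ _ f)). bt. Qed.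

Lemma mcs_bdand a b : S (Bd a) -> S (Bd b) -> S (Bd (And a b)).
Proof. intros H1 H2. apply (mcs_imp _ _ (mcs_thm _ (ax_and _ _ _ a b))). apply mcs_and; auto. Qed.

Definition Box f := forall g, S (Bd (Or f g)).

Variable chi : F.
Hypothesis Hchi : ~ S (Bd chi).

Lemma no_both a : S (Bd (Or a chi)) -> S (Bd (Or (Neg a) chi)) -> False.
Proof.
  intros H1 H2. apply Hchi. pose proof (mcs_bdand _ _ H1 H2) as H.
  refine (mcs_ret _ _ _ H); bt.
Qed.

Lemma box_char f : S (Bd f) -> S (Bd (Or f chi)) -> Box f.
Proof.
  intros H1 H2 g.
  pose proof (mcs_imp _ _ (mcs_thm _ (ax_dis _ _ _ f g chi)) H1) as H.
  destruct (mcs_or _ _ H) as [|H3]; auto. exfalso; apply (no_both f); auto.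
Qed.

Lemma box_d f : Box f -> S (Bd f).
Proof. intros H. refine (mcs_ret _ _ _ (H f)); bt. Qed.

Lemma box_mono a b : Box a -> Thm (Imp a b) -> Box b.
Proof.
  intros Ha Ht g.
  pose proof (mcs_imp _ _ (mcs_thm _ (ax_dis _ _ _ a (Or b g) chi)) (box_d _ Ha)) as H.
  destruct (mcs_or _ _ H) as [H1|H1].
  - refine (mcs_re _ _ (thm_mp1 _ _ Ht _) H1). bt.
  - exfalso; apply (no_both a); auto.
Qed.

Lemma box_and a b : Box a -> Box b -> Box (And a b).
Proof.
  intros Ha Hb. apply box_char.
  - apply mcs_bdand; apply box_d; auto.
  - pose proof (mcs_bdand _ _ (Ha chi) (Hb chi)) as H.
    refine (mcs_ret _ _ _ H); bt.
Qed.

Lemma box_top : Box (Top p0).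
Proof.
  apply box_char.
  - apply mcs_thm. apply ax_top.
  - refine (mcs_ret _ _ _ (mcs_thm _ (ax_top _ _ _))); bt.
Qed.

Lemma box_conj l : (forall g, In g l -> Box g) -> Box (conj p0 l).
Proof.
  induction l as [|a l IH]; intros H.
  - apply box_top.
  - apply (box_mono (And a (conj p0 l))).
    + apply box_and. apply H; left; auto. apply IH; intros; apply H; right; auto.
    + apply thm_imp. intros v Hv. rewrite peval_conj_cons. exact Hv.
Qed.

End MCS.

Lemma zorn_wrap (T : Type) (Pc : (T -> Prop) -> Prop) :
  (forall Fm : (T -> Prop) -> Prop, (forall X, Fm X -> Pc X) ->
     (forall X Y, Fm X -> Fm Y -> (forall x, X x -> Y x) \/ (forall x, Y x -> X x)) ->
     Pc (fun x => exists2 X, Fm X & X x)) ->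
  exists A, Pc A /\ forall B, (forall x, A x -> B x) -> ~ (forall x, B x -> A x) -> ~ Pc B.
Proof.
  intros H. destruct (@classical_sets.Zorn_bigcup T Pc H) as [A [H1 H2]].
  exists A. split; auto. intros B HAB HBA. apply H2. split; auto.
Qed.

Lemma chain_list (Gm : F -> Prop) (Fm : (F -> Prop) -> Prop) l :
  (forall X Y, Fm X -> Fm Y -> (forall x, X x -> Y x) \/ (forall x, Y x -> X x)) ->
  (forall g, In g l -> Gm g \/ exists2 X, Fm X & X g) ->
  (forall g, In g l -> Gm g) \/ exists X, Fm X /\ forall g, In g l -> Gm g \/ X g.
Proof.
  intros Htot. induction l as [|a l IH]; intros H.
  - left; intros g [].
  - destruct IH as [H1|[X [HX H2]]]. { intros g Hg; apply H; right; auto. }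
    + destruct (H a (or_introl eq_refl)) as [Ha|[X0 HX0 Ha]].
      * left; intros g [<-|Hg]; auto.
      * right; exists X0; split; auto. intros g [<-|Hg]; auto.
    + destruct (H a (or_introl eq_refl)) as [Ha|[X0 HX0 Ha]].
      * right; exists X; split; auto. intros g [<-|Hg]; auto.
      * destruct (Htot X0 X HX0 HX) as [Hs|Hs].
        -- right; exists X; split; auto. intros g [<-|Hg]; auto.
        -- right; exists X0; split; auto. intros g [<-|Hg]; auto.
           destruct (H2 g Hg); auto.
Qed.

Lemma lindenbaum (Gm : F -> Prop) : cons Gm -> exists S, mcs S /\ forall f, Gm f -> S f.
Proof.
  intros HG. set (Pc := fun A : F -> Prop => cons (fun f => Gm f \/ A f)).
  destruct (zorn_wrap F Pc) as [A [HA Hmax]].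
  { intros Fm HFm Htot [l [Hl Ht]].
    destruct (chain_list Gm Fm l Htot Hl) as [H1|[X [HX H2]]].
    - apply HG; exists l; split; auto.
    - apply (HFm X HX); exists l; split; auto. }
  exists (fun f => Gm f \/ A f). split; [split|].
  - exact HA.
  - intros f. apply NNPP; intro Hn.
    assert (C1 : ~ Pc (fun x => A x \/ x = f)).
    { apply Hmax. intros x; auto. intro Hs. apply Hn; left; right; apply Hs; right; auto. }
    assert (C2 : ~ Pc (fun x => A x \/ x = Neg f)).
    { apply Hmax. intros x; auto. intro Hs. apply Hn; right; right; apply Hs; right; auto. }
    apply NNPP in C1. apply NNPP in C2.
    destruct C1 as [l1 [Hl1 Ht1]]. destruct C2 as [l2 [Hl2 Ht2]].
    destruct (split_list (fun g => Gm g \/ A g) f l1) as [l1' [Hl1' Hv1]].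
    { intros g Hg. specialize (Hl1 g Hg). tauto. }
    destruct (split_list (fun g => Gm g \/ A g) (Neg f) l2) as [l2' [Hl2' Hv2]].
    { intros g Hg. specialize (Hl2 g Hg). tauto. }
    apply HA. exists (l1' ++ l2'). split.
    { intros g Hg. apply in_app_or in Hg. destruct Hg; auto. }
    apply (thm_mp2 _ _ _ Ht1 Ht2). intros v H1 H2. simpl.
    destruct (peval v (conj p0 (l1' ++ l2'))) eqn:E; [|reflexivity].
    rewrite peval_conj in E.
    assert (E1 : peval v (conj p0 l1') = true) by (apply peval_conj; intros; apply E; apply in_or_app; auto).
    assert (E2 : peval v (conj p0 l2') = true) by (apply peval_conj; intros; apply E; apply in_or_app; auto).
    simpl in H1, H2. destruct (peval v f) eqn:Ef.
    + rewrite (Hv1 v E1 Ef) in H1. discriminate.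
    + rewrite (Hv2 v E2 ltac:(simpl; rewrite Ef; reflexivity)) in H2. discriminate.
  - intros f Hf; left; auto.
Qed.

Lemma exist_succ S chi psi : mcs S -> ~ S (Bd chi) -> ~ Box S psi ->
  exists T, mcs T /\ (forall th, Box S th -> T th) /\ T (Neg psi).
Proof.
  intros HS Hchi Hpsi.
  destruct (lindenbaum (fun f => Box S f \/ f = Neg psi)) as [T [HT HTs]].
  - intros [l [Hl Ht]]. destruct (split_list (Box S) (Neg psi) l Hl) as [l' [Hl' Hv]].
    apply Hpsi. apply (box_mono S HS chi Hchi (conj p0 l')).
    + apply (box_conj S HS chi Hchi). auto.
    + apply (derive_incons l); auto.
  - exists T. split; auto.
Qed.

Definition W := { S : F -> Prop | mcs S }.
Definition CR (s t : W) : Prop :=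
  (exists chi, ~ proj1_sig s (Bd chi)) /\ forall f, Box (proj1_sig s) f -> proj1_sig t f.
Definition Canon (w : W) : model P :=
  {| st := W; st_inh := inhabits w; R1 := CR; R2 := CR; val := fun p s => proj1_sig s (Var p) |}.

Lemma truth (w : W) f : forall s : W, @sat P (Canon w) s f <-> proj1_sig s f.
Proof.
  induction f as [p|f IH|f1 IH1 f2 IH2|f IH]; intros s; pose proof (proj2_sig s) as Hs; simpl in Hs.
  - reflexivity.
  - change (~ @sat P (Canon w) s f <-> proj1_sig s (Neg f)). rewrite IH, mcs_neg; auto. tauto.
  - change (@sat P (Canon w) s f1 /\ @sat P (Canon w) s f2 <-> proj1_sig s (And f1 f2)).
    rewrite IH1, IH2, mcs_and_iff; auto. tauto.
  - rewrite sat_bd. split.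
    + intros Hb. destruct (proj2 Hs (Bd f)) as [|Hn]; auto. exfalso.
      apply (mcs_neg _ Hs) in Hn.
      assert (N1 : ~ Box (proj1_sig s) f) by (intro H; apply Hn; apply (box_d _ Hs); auto).
      assert (N2 : ~ Box (proj1_sig s) (Neg f)).
      { intro H; apply Hn; apply (mcs_dneg _ Hs); apply (box_d _ Hs); auto. }
      destruct (exist_succ _ f f Hs Hn N1) as [T [HT [HT1 HT2]]].
      destruct (exist_succ _ f (Neg f) Hs Hn N2) as [U [HU [HU1 HU2]]].
      assert (Rt : CR s (exist _ T HT)) by (split; eauto).
      assert (Ru : CR s (exist _ U HU)) by (split; eauto).
      specialize (Hb _ _ Rt Ru). rewrite !IH in Hb. simpl in Hb.
      apply (mcs_neg _ HU) in HU2. apply (mcs_neg _ HT) in HT2.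
      apply HT2. apply Hb. destruct (proj2 HU f) as [|X]; [auto|contradiction].
    + intros Hd t u [[chi Hchi] Ht] [_ Hu]. rewrite !IH.
      pose proof (mcs_imp _ Hs _ _ (mcs_thm _ Hs _ (ax_dis _ _ _ f chi chi)) Hd) as H.
      destruct (mcs_or _ Hs _ _ H) as [H1|H1].
      * pose proof (box_char _ Hs chi Hchi f Hd H1) as B. split; intros _; auto.
      * pose proof (box_char _ Hs chi Hchi (Neg f) (mcs_negd _ Hs _ Hd) H1) as B.
        pose proof (Ht _ B) as A1. pose proof (Hu _ B) as A2.
        apply (mcs_neg _ (proj2_sig t)) in A1. apply (mcs_neg _ (proj2_sig u)) in A2. tauto.
Qed.

Lemma box5 S a : mcs S -> ~ S (Bd a) -> Box S (Neg (Bd a)).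
Proof.
  intros HS Ha g. apply (mcs_imp _ HS (Neg (Bd a))).
  - apply (mcs_thm _ HS). apply ax_extra. exists a, g. reflexivity.
  - apply mcs_neg; auto.
Qed.

Lemma euclid s t u : CR s t -> CR s u -> CR t u.
Proof.
  intros [[chi Hchi] Ht] [_ Hu].
  pose proof (proj2_sig s) as Hs; pose proof (proj2_sig t) as HT; simpl in *.
  split.
  - exists chi. apply (mcs_neg _ HT). apply Ht. apply box5; auto.
  - intros f Hf. apply Hu. apply NNPP; intro Hnb.
    destruct (classic (proj1_sig s (Bd f))) as [H1|H1].
    + assert (H2 : ~ proj1_sig s (Bd (Or f chi))) by (intro; apply Hnb; apply (box_char _ Hs chi); auto).
      pose proof (Ht _ (box5 _ _ Hs H2)) as A. apply (mcs_neg _ HT) in A. apply A. apply Hf.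
    + pose proof (Ht _ (box5 _ _ Hs H1)) as A. apply (mcs_neg _ HT) in A. apply A.
      apply (box_d _ HT). auto.
Qed.

Lemma completeness (G : F -> Prop) phi : conseq pe G phi -> K5_derives p0 G phi.
Proof.
  intros H. apply NNPP; intro Hn.
  destruct (lindenbaum (fun f => G f \/ f = Neg phi)) as [w [Hw HwG]].
  - intros [l [Hl Ht]]. destruct (split_list G (Neg phi) l Hl) as [l' [Hl' Hv]].
    apply Hn. exists l'. split; auto. apply (derive_incons l); auto.
  - set (M := Canon (exist _ w Hw)).
    assert (Hpe : pe M).
    { intros i j x y z Hxy Hxz. destruct i, j; simpl in *; split; apply (euclid x y z); auto. }
    assert (Hsat : @sat P M (exist _ w Hw) phi).
    { apply H; auto. intros g Hg. apply truth. simpl. apply HwG; auto. }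
    apply truth in Hsat. simpl in Hsat.
    apply (mcs_neg _ Hw phi); auto.
Qed.

Lemma pe_qe (M : model P) : pe M -> qe M.
Proof. intros H i j x y z H1 H2. destruct (H i j x y z H1 H2). destruct j; simpl; auto. Qed.

Lemma sound_derives (G : F -> Prop) phi : K5_derives p0 G phi -> conseq qe G phi.
Proof.
  intros [l [Hl Ht]] M s HM HG.
  pose proof (proj1 (sat_imp _ _ _ _) (soundness _ Ht M HM s)) as H. apply H.
  apply sat_conj. auto.
Qed.

End S.

Theorem mainTheorem20 (P : Type) (p0 : P) (G : form P -> Prop) (phi : form P) :
  (K5_derives p0 G phi <-> conseq qe G phi) /\
  (conseq qe G phi <-> conseq pe G phi).
Proof.
  assert (A : conseq qe G phi -> conseq pe G phi).
  { intros H M s HM. apply H. apply pe_qe; auto. }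
  split; split.
  - apply sound_derives.
  - intros H. apply completeness. auto.
  - exact A.
  - intros H. apply (sound_derives P p0). apply completeness. auto.
Qed.
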